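(* Let $p$ be a prime and let $(M\ N)$ be a coprime symmetric pair of $2\times 2$ integer matrices with $\operatorname{rank}_p M=1$, where $$M=\begin{pmatrix} m_1&m_2\\ p m_3&p m_4\end{pmatrix},\qquad N=\begin{pmatrix} n_1&n_2\\ n_3&n_4\end{pmatrix}$$ with $m_i,n_i\in\mathbb Z$. Then $p\mid m_1$ if and only if $p\mid n_4$, and $p\mid m_2$ if and only if $p\mid n_3$.
   Context: A pair $(M\ N)$ of $2\times 2$ matrices is called symmetric if $M\,{}^tN=N\,{}^tM$. It is a coprime pair if $M,N$ are integral and, for a $2\times 2$ rational matrix $G$, the pair $(GM\ GN)$ is integral only if $G$ is integral; equivalently, the $2\times 4$ matrix $(M\ N)$ has rank $2$ modulo every prime. $\operatorname{rank}_p M$ denotes the rank of $M$ modulo $p$. *)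

(* Defs.v *)
From HB Require Import structures.
From mathcomp Require Import all_boot all_order all_algebra.
Set Implicit Arguments. Unset Strict Implicit. Unset Printing Implicit Defensive.
Import Order.TTheory GRing.Theory Num.Theory.
Local Open Scope ring_scope.

Definition mx2 (a b c d : int) : 'M[int]_2 :=
  \matrix_(i < 2, j < 2)
    (if i == 0 then (if j == 0 then a else b) else (if j == 0 then c else d)).

Definition mx_modp (q : nat) (m n : nat) (A : 'M[int]_(m, n)) : 'M['F_q]_(m, n) :=
  map_mx (fun x : int => x%:~R) A.

Definition rank_mod (q : nat) (m n : nat) (A : 'M[int]_(m, n)) : nat :=
  \rank (mx_modp q A).

Definition symmetric_pair (M N : 'M[int]_2) : Prop := M *m N^T = N *m M^T.

Definition coprime_pair (M N : 'M[int]_2) : Prop :=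
  forall q : nat, prime q -> rank_mod q (row_mx M N) = 2%N.

(* Main.v *)
Require Import Defs.
From HB Require Import structures.
From mathcomp Require Import all_boot all_order all_algebra.
Import Order.TTheory GRing.Theory Num.Theory.
Local Open Scope ring_scope.

Lemma key (p : nat) (x : int) : prime p ->
  ((x%:~R : 'F_p) == 0) = (p%:Z %| x)%Z.
Proof.
move=> pp; rewrite dvdzE /= (dvdn_pcharf (pchar_Fp pp)).
case: x => n; first by [].
by rewrite NegzE mulrNz oppr_eq0 /=.
Qed.

Lemma mx2E (R : nzRingType) (a b c d : int) (i j : 'I_2) :
  (map_mx (fun x : int => x%:~R : R) (mx2 a b c d)) i j =
  (if i == 0 then (if j == 0 then a else b) else (if j == 0 then c else d))%:~R.
Proof. by rewrite !mxE. Qed.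

Theorem lemma3p1 (p : nat) (m1 m2 m3 m4 n1 n2 n3 n4 : int) :
  prime p ->
  coprime_pair (mx2 m1 m2 (p%:Z * m3) (p%:Z * m4)) (mx2 n1 n2 n3 n4) ->
  symmetric_pair (mx2 m1 m2 (p%:Z * m3) (p%:Z * m4)) (mx2 n1 n2 n3 n4) ->
  rank_mod p (mx2 m1 m2 (p%:Z * m3) (p%:Z * m4)) = 1%N ->
  ((p%:Z %| m1)%Z <-> (p%:Z %| n4)%Z) /\ ((p%:Z %| m2)%Z <-> (p%:Z %| n3)%Z).
Proof.
move=> pp cop sym rk.
have p0 : (p%:Z%:~R : 'F_p) = 0 by apply/eqP; rewrite key.
set a : 'F_p := m1%:~R; set b : 'F_p := m2%:~R.
set c : 'F_p := n3%:~R; set d : 'F_p := n4%:~R.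
have Eq : a * c + b * d = 0.
  have := congr1 (fun A : 'M[int]_2 => A 0 1) sym.
  rewrite !mxE !big_ord_recl !big_ord0 !mxE /= => /(congr1 (fun x : int => x%:~R : 'F_p)).
  by rewrite !addr0 !rmorphD !rmorphM /= p0 !mul0r !mulr0 ?add0r ?addr0 => ->.
have ab : (a != 0) || (b != 0).
  rewrite -negb_and; apply/negP => /andP [/eqP a0 /eqP b0].
  move: rk; rewrite /rank_mod.
  suff -> : mx_modp p (mx2 m1 m2 (p%:Z * m3) (p%:Z * m4)) = 0 by rewrite mxrank0.
  apply/matrixP => i j; rewrite /mx_modp mx2E mxE.
  case: i => [[|[|//]] ?]; case: j => [[|[|//]] ?] //=;
    by rewrite ?rmorphM /= ?p0 ?mul0r.
have cd : (c != 0) || (d != 0).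
  rewrite -negb_and; apply/negP => /andP [/eqP c0 /eqP d0].
  have := cop p pp; rewrite /rank_mod => h.
  set A := mx_modp p _ in h.
  have AE : A = (\col_(i < 2) (if i == 0 then 1 else 0 : 'F_p)) *m row 0 A.
    apply/matrixP => i j; rewrite !mxE big_ord1 !mxE.
    case: i => [[|[|//]] ?] /=.
      by rewrite mul1r (_ : Ordinal _ = 0) //; apply: val_inj.
    rewrite mul0r.
    case: splitP => k _; case: k => [[|[|//]] ?]; rewrite !mxE /=;
      by [rewrite rmorphM /= p0 mul0r | exact: c0 | exact: d0].
  have := mxrankM_maxl (\col_(i < 2) (if i == 0 then 1 else 0 : 'F_p)) (row 0 A).
  by rewrite -AE h => /leq_trans /(_ (rank_leq_col _)).
rewrite -!(key _ _ pp) -/a -/b -/c -/d; split; split => /eqP h0.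
- move: Eq; rewrite h0 mul0r add0r => /eqP; rewrite mulf_eq0.
  by move: ab; rewrite h0 eqxx /= => /negbTE -> //=.
- move: Eq; rewrite h0 mulr0 addr0 => /eqP; rewrite mulf_eq0.
  by move: cd; rewrite h0 eqxx orbF => /negbTE ->; rewrite orbF.
- move: Eq; rewrite h0 mul0r addr0 => /eqP; rewrite mulf_eq0.
  by move: ab; rewrite h0 eqxx orbF => /negbTE -> //=.
- move: Eq; rewrite h0 mulr0 add0r => /eqP; rewrite mulf_eq0.
  by move: cd; rewrite h0 eqxx /= => /negbTE ->; rewrite orbF.
Qed.
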